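(* Let $(x(t),y(t))$ be any trajectory of system (5), and define $\Psi(t)=\max_{i\in\mathcal V_F}|x_i(t)|^2_{\mathcal L(y(t))}$ and $q(t)=\max_{i\in\mathcal V_L}|u_i(y(t),t)|+\max_{i\in\mathcal V_F}|w_i(t)|$. Then for all $t\ge0$ the upper Dini derivative satisfies $D^+\sqrt{\Psi(t)}\le q(t)$, where $D^+h(t)=\limsup_{s\to0^+}\frac{h(t+s)-h(t)}{s}$.
   Context: Standing setup. Fix integers $n\ge 2$, $k\ge 1$, $d\ge 1$. The follower set is $\mathcal V_F=\{1,\dots,n\}$ and the leader set is $\mathcal V_L=\{\hat 1,\dots,\hat k\}$ (disjoint from $\mathcal V_F$); $\mathcal V=\mathcal V_F\cup\mathcal V_L$. The interaction topology is a time-varying digraph $\mathcal G_{\sigma(t)}=(\mathcal V,\mathcal E_{\sigma(t)})$, where $\sigma:[0,\infty)\to\mathcal P$ is a piecewise constant switching signal taking values in a finite set $\mathcal P$ of digraphs on $\mathcal V$; no arc of any of these digraphs enters a leader. An arc $(j,i)$ means that $i$ receives information from $j$. Dwell-time assumption: any two consecutive switching instants of $\sigma$ are separated by at least $\tau_D>0$. For $i\in\mathcal V_F$, $N_i(\sigma(t))=\{j\in\mathcal V_F:(j,i)\in\mathcal E_{\sigma(t)}\}$ and $L_i(\sigma(t))=\{j\in\mathcal V_L:(j,i)\in\mathcal E_{\sigma(t)}\}$. System (5): $\dot y_i=u_i(y,t)$ for $i=1,\dots,k$, and $\dot x_i=\sum_{j\in N_i(\sigma(t))}a_{ij}(x,y,t)(x_j-x_i)+\sum_{j\in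 L_i(\sigma(t))}b_{ij}(x,y,t)(y_j-x_i)+w_i(t)$ for $i=1,\dots,n$, where $x_i,y_j\in\mathbb R^d$, $x=(x_1,\dots,x_n)$, $y=(y_1,\dots,y_k)$; each $u_i(y,t)$ is continuous in $y$ and piecewise continuous in $t$; each $w_i$ is continuous; the weights $a_{ij},b_{ij}$ are continuous and satisfy $a_*\le a_{ij}(x,y,t)\le a^*$, $b_{ij}(x,y,t)\ge b_*$ for all $x,y,t$, with constants $0<a_*\le a^*$, $b_*>0$. Set notation: $|\cdot|$ is the Euclidean norm; for a closed convex $K\subset\mathbb R^d$, $|v|_K=\inf_{p\in K}|v-p|$; $\mathcal L(y(t))=\mathrm{co}\{y_1(t),\dots,y_k(t)\}$ (convex hull). *)

(* Defs.v *)
From Stdlib Require Import Reals Lra Lia ClassicalEpsilon.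
Open Scope R_scope.

(* Vectors of R^d are modelled as nat -> R; only coordinates c < d matter.
   Agent-indexed families (followers 1..n as 0..n-1, leaders ^1..^k as 0..k-1)
   are nat -> vec. *)
Definition vec := nat -> R.
Definition fam := nat -> vec.

Fixpoint fsum (m : nat) (f : nat -> R) : R :=
  match m with O => 0 | S m' => fsum m' f + f m' end.

(* fmaxS m f = max (f 0, ..., f m);  fmax m f = max_{i < m} f i  (m >= 1) *)
Fixpoint fmaxS (m : nat) (f : nat -> R) : R :=
  match m with O => f O | S m' => Rmax (fmaxS m' f) (f (S m')) end.
Definition fmax (m : nat) (f : nat -> R) : R := fmaxS (pred m) f.

Definition vnorm (d : nat) (v : vec) : R := sqrt (fsum d (fun c => v c ^ 2)).

Definition is_glb (E : R -> Prop) (m : R) : Prop :=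
  (forall r, E r -> m <= r) /\ (forall m', (forall r, E r -> m' <= r) -> m' <= m).

Definition Rinf (E : R -> Prop) : R := epsilon (inhabits 0) (fun m => is_glb E m).

Definition set_dist (d : nat) (v : vec) (K : vec -> Prop) : R :=
  Rinf (fun r => exists p, K p /\ r = vnorm d (fun c => v c - p c)).

Definition conv_hull (k d : nat) (y : fam) : vec -> Prop :=
  fun p => exists lam : nat -> R,
    (forall j, (j < k)%nat -> 0 <= lam j) /\ fsum k lam = 1 /\
    (forall c, (c < d)%nat -> p c = fsum k (fun j => lam j * y j c)).

(* Upper Dini derivative bound: D^+ h(t) <= c, i.e.
   limsup_{s -> 0+} (h(t+s) - h(t))/s <= c, unfolded. *)
Definition dini_upper_le (h : R -> R) (t c : R) : Prop :=
  forall eps, 0 < eps -> exists delta, 0 < delta /\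
    forall s, 0 < s < delta -> (h (t + s) - h t) / s <= c + eps.

Definition right_deriv (f : R -> R) (t l : R) : Prop :=
  forall eps, 0 < eps -> exists delta, 0 < delta /\
    forall s, 0 < s < delta -> Rabs ((f (t + s) - f t) / s - l) < eps.

Definition cont_nonneg (f : R -> R) : Prop :=
  forall t, 0 <= t -> forall eps, 0 < eps -> exists delta, 0 < delta /\
    forall s, 0 <= s -> Rabs (s - t) < delta -> Rabs (f s - f t) < eps.

Definition fam_close (m d : nat) (z z' : fam) (delta : R) : Prop :=
  forall i c, (i < m)%nat -> (c < d)%nat -> Rabs (z' i c - z i c) < delta.

Definition cont_fam (m d : nat) (F : fam -> R) : Prop :=
  forall z eps, 0 < eps -> exists delta, 0 < delta /\
    forall z', fam_close m d z z' delta -> Rabs (F z' - F z) < eps.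

Definition cont_weight (n k d : nat) (F : fam -> fam -> R -> R) : Prop :=
  forall x y t eps, 0 < eps -> exists delta, 0 < delta /\
    forall x' y' t', fam_close n d x x' delta -> fam_close k d y y' delta ->
      Rabs (t' - t) < delta -> Rabs (F x' y' t' - F x y t) < eps.

Definition right_lim (g : R -> R) (t l : R) : Prop :=
  forall eps, 0 < eps -> exists delta, 0 < delta /\
    forall s, t < s < t + delta -> Rabs (g s - l) < eps.
Definition left_lim (g : R -> R) (t l : R) : Prop :=
  forall eps, 0 < eps -> exists delta, 0 < delta /\
    forall s, t - delta < s < t -> Rabs (g s - l) < eps.

Definition piecewise_cont (g : R -> R) : Prop :=
  exists ts : nat -> R, ts O = 0 /\ (forall m, ts m < ts (S m)) /\
    (forall M, exists m, M < ts m) /\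
    forall m, (forall t, ts m < t < ts (S m) -> continuity_pt g t) /\
      (exists l, right_lim g (ts m) l) /\ (exists l, left_lim g (ts (S m)) l).

Definition dwell_switching (nP : nat) (tauD : R) (sigma : R -> nat) : Prop :=
  (forall t, 0 <= t -> (sigma t < nP)%nat) /\
  exists ts : nat -> R, ts O = 0 /\ (forall m, ts (S m) - ts m >= tauD) /\
    forall m t, ts m <= t < ts (S m) -> sigma t = sigma (ts m).

(* right-hand side of the follower dynamics in system (5), coordinate c.
   EF p j i = true iff arc (follower j, follower i) in digraph p;
   EL p j i = true iff arc (leader j, follower i) in digraph p. *)
Definition follower_rhs (n k : nat) (EF EL : nat -> nat -> nat -> bool)
  (sigma : R -> nat) (a b : nat -> nat -> fam -> fam -> R -> R)
  (w : nat -> R -> vec) (x y : fam) (t : R) (i c : nat) : R :=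
  fsum n (fun j => if EF (sigma t) j i then a i j x y t * (x j c - x i c) else 0)
  + fsum k (fun j => if EL (sigma t) j i then b i j x y t * (y j c - x i c) else 0)
  + w i t c.

Definition trajectory (n k d : nat) (EF EL : nat -> nat -> nat -> bool)
  (sigma : R -> nat) (a b : nat -> nat -> fam -> fam -> R -> R)
  (u : nat -> fam -> R -> vec) (w : nat -> R -> vec)
  (x y : R -> fam) : Prop :=
  (forall i c, (i < n)%nat -> (c < d)%nat -> cont_nonneg (fun s => x s i c)) /\
  (forall j c, (j < k)%nat -> (c < d)%nat -> cont_nonneg (fun s => y s j c)) /\
  (forall j c t, (j < k)%nat -> (c < d)%nat -> 0 <= t ->
     right_deriv (fun s => y s j c) t (u j (y t) t c)) /\
  (forall i c t, (i < n)%nat -> (c < d)%nat -> 0 <= t ->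
     right_deriv (fun s => x s i c) t
       (follower_rhs n k EF EL sigma a b w (x t) (y t) t i c)).

(* Main.v *)
Require Import Defs.
From Stdlib Require Import Reals Lra Lia Classical ClassicalEpsilon.
Open Scope R_scope.


Lemma fsum_ext m f g : (forall j, (j < m)%nat -> f j = g j) -> fsum m f = fsum m g.
Proof. induction m; simpl; intros H; [reflexivity|].
  rewrite IHm by (intros; apply H; lia). rewrite H by lia. reflexivity. Qed.

Lemma fsum_S m f : fsum (S m) f = fsum m f + f m.
Proof. reflexivity. Qed.

Lemma fsum_le m f g : (forall j, (j < m)%nat -> f j <= g j) -> fsum m f <= fsum m g.
Proof. induction m; simpl; intros H; [lra|].
  assert (fsum m f <= fsum m g) by (apply IHm; intros; apply H; lia).
  assert (f m <= g m) by (apply H; lia). lra. Qed.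

Lemma fsum_plus m f g : fsum m (fun j => f j + g j) = fsum m f + fsum m g.
Proof. induction m; simpl; [lra|]. rewrite IHm. ring. Qed.

Lemma fsum_minus m f g : fsum m (fun j => f j - g j) = fsum m f - fsum m g.
Proof. induction m; simpl; [lra|]. rewrite IHm. ring. Qed.

Lemma fsum_scal m r f : fsum m (fun j => r * f j) = r * fsum m f.
Proof. induction m; simpl; [lra|]. rewrite IHm. ring. Qed.

Lemma fsum_scal_r m r f : fsum m (fun j => f j * r) = fsum m f * r.
Proof. induction m; simpl; [lra|]. rewrite IHm. ring. Qed.

Lemma fsum_const m r : fsum m (fun _ => r) = INR m * r.
Proof. induction m; simpl fsum; [simpl; lra|]. rewrite IHm, S_INR. ring. Qed.

Lemma fsum_swap m p F : fsum m (fun i => fsum p (fun j => F i j)) = fsum p (fun j => fsum m (fun i => F i j)).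
Proof. induction m; simpl.
  - rewrite fsum_const; ring.
  - rewrite IHm. rewrite <- fsum_plus. reflexivity. Qed.

Lemma fsum_nonneg m f : (forall j, (j < m)%nat -> 0 <= f j) -> 0 <= fsum m f.
Proof. intros H. replace 0 with (fsum m (fun _ => 0)).
  apply fsum_le; auto. rewrite fsum_const; ring. Qed.

Lemma fsum_ind0 m f : (1 <= m)%nat -> fsum m (fun j => if Nat.eqb j 0 then f j else 0) = f 0%nat.
Proof. induction m; intros H; [lia|]. destruct m.
  - simpl. ring.
  - change (fsum (S (S m)) ?g) with (fsum (S m) g + g (S m)). rewrite (IHm ltac:(lia)). simpl. ring. Qed.

Lemma fmaxS_ge m f i : (i <= m)%nat -> f i <= fmaxS m f.
Proof. induction m; intros H.
  - assert (i = 0%nat) by lia. subst. simpl. lra.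
  - simpl. destruct (Nat.eq_dec i (S m)).
    + subst. apply Rmax_r.
    + eapply Rle_trans; [apply IHm; lia| apply Rmax_l]. Qed.

Lemma fmax_ge m f i : (i < m)%nat -> f i <= fmax m f.
Proof. intros; unfold fmax; apply fmaxS_ge; lia. Qed.

Lemma fmaxS_le m f B : (forall i, (i <= m)%nat -> f i <= B) -> fmaxS m f <= B.
Proof. induction m; intros H; simpl.
  - apply H; lia.
  - apply Rmax_lub; [apply IHm; intros; apply H; lia| apply H; lia]. Qed.

Lemma fmax_le m f B : (1 <= m)%nat -> (forall i, (i < m)%nat -> f i <= B) -> fmax m f <= B.
Proof. intros Hm H; unfold fmax; apply fmaxS_le; intros; apply H; lia. Qed.

Lemma vnorm_nonneg d v : 0 <= vnorm d v.
Proof. unfold vnorm; apply sqrt_pos. Qed.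

Lemma fsum_sq_nonneg d v : 0 <= fsum d (fun c => v c ^ 2).
Proof. apply fsum_nonneg; intros; apply pow2_ge_0. Qed.

Lemma vnorm_ext d v w : (forall c, (c < d)%nat -> v c = w c) -> vnorm d v = vnorm d w.
Proof. intros H; unfold vnorm; f_equal; apply fsum_ext; intros; rewrite H; auto. Qed.

Lemma vnorm_zero d v : (forall c, (c < d)%nat -> v c = 0) -> vnorm d v = 0.
Proof. intros H. unfold vnorm. rewrite (fsum_ext d _ (fun _ => 0)).
  rewrite fsum_const. replace (INR d * 0) with 0 by ring. apply sqrt_0.
  intros; rewrite H; auto; ring. Qed.

Lemma vnorm_scal d r v : vnorm d (fun c => r * v c) = Rabs r * vnorm d v.
Proof. unfold vnorm.
  rewrite (fsum_ext d _ (fun c => r ^ 2 * v c ^ 2)) by (intros; ring).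
  rewrite fsum_scal. rewrite sqrt_mult_alt by apply pow2_ge_0.
  rewrite <- Rsqr_pow2, sqrt_Rsqr_abs. reflexivity. Qed.

Lemma tri2 P P' Q a b : 0 <= P -> 0 <= P' -> 0 <= Q -> Q <= P + P' ->
  sqrt (Q ^ 2 + (a + b) ^ 2) <= sqrt (P ^ 2 + a ^ 2) + sqrt (P' ^ 2 + b ^ 2).
Proof. intros HP HP' HQ HQP.
  assert (H1 : 0 <= P ^ 2 + a ^ 2) by nra.
  assert (H2 : 0 <= P' ^ 2 + b ^ 2) by nra.
  set (R1 := sqrt (P ^ 2 + a ^ 2)). set (R2 := sqrt (P' ^ 2 + b ^ 2)).
  assert (E1 : R1 ^ 2 = P ^ 2 + a ^ 2) by (apply pow2_sqrt; auto).
  assert (E2 : R2 ^ 2 = P' ^ 2 + b ^ 2) by (apply pow2_sqrt; auto).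
  assert (G1 : 0 <= R1) by apply sqrt_pos. assert (G2 : 0 <= R2) by apply sqrt_pos.
  assert (HRR : P * P' + a * b <= R1 * R2).
  { assert ((R1 * R2) ^ 2 >= (P * P' + a * b) ^ 2).
    { replace ((R1 * R2) ^ 2) with (R1 ^ 2 * R2 ^ 2) by ring. rewrite E1, E2.
      assert (0 <= (P * b - P' * a) ^ 2) by apply pow2_ge_0. nra. }
    assert (0 <= R1 * R2) by nra. nra. }
  rewrite <- (sqrt_pow2 (R1 + R2)) by lra.
  apply sqrt_le_1_alt.
  assert (Q ^ 2 <= (P + P') ^ 2) by nra.
  replace ((R1 + R2) ^ 2) with (R1 ^ 2 + R2 ^ 2 + 2 * (R1 * R2)) by ring.
  rewrite E1, E2. nra. Qed.

Lemma vnorm_add d v w : vnorm d (fun c => v c + w c) <= vnorm d v + vnorm d w.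
Proof. induction d.
  - unfold vnorm; simpl. rewrite sqrt_0. lra.
  - unfold vnorm in *. rewrite !fsum_S. cbv beta.
    pose proof (fsum_sq_nonneg d v). pose proof (fsum_sq_nonneg d w).
    pose proof (fsum_sq_nonneg d (fun c => v c + w c)).
    rewrite <- (pow2_sqrt (fsum d (fun c => v c ^ 2))) by auto.
    rewrite <- (pow2_sqrt (fsum d (fun c => w c ^ 2))) by auto.
    rewrite <- (pow2_sqrt (fsum d (fun c => (v c + w c) ^ 2))) by auto.
    apply tri2; auto; apply sqrt_pos. Qed.

Lemma vnorm_sub d v w : vnorm d (fun c => v c - w c) <= vnorm d v + vnorm d w.
Proof. rewrite (vnorm_ext d _ (fun c => v c + (-1) * w c)) by (intros; ring).
  eapply Rle_trans; [apply (vnorm_add d v (fun c => (-1) * w c))|].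
  rewrite vnorm_scal. replace (Rabs (-1)) with 1 by (rewrite Rabs_left; lra). lra. Qed.

Lemma vnorm_fsum d m F : vnorm d (fun c => fsum m (fun j => F j c)) <= fsum m (fun j => vnorm d (F j)).
Proof. induction m; simpl.
  - rewrite vnorm_zero; auto; lra.
  - eapply Rle_trans; [apply (vnorm_add d (fun c => fsum m (fun j => F j c)) (F m))|]. lra. Qed.

Lemma vnorm_le_abs d v : vnorm d v <= fsum d (fun c => Rabs (v c)).
Proof. induction d.
  - unfold vnorm; simpl. rewrite sqrt_0. lra.
  - unfold vnorm in *. rewrite !fsum_S. cbv beta.
    pose proof (fsum_sq_nonneg d v).
    set (T := fsum d (fun c => Rabs (v c))) in *.
    assert (0 <= T) by (apply fsum_nonneg; intros; apply Rabs_pos).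
    pose proof (Rabs_pos (v d)).
    rewrite <- (sqrt_pow2 (T + Rabs (v d))) by lra.
    apply sqrt_le_1_alt.
    rewrite <- (pow2_sqrt (fsum d (fun c => v c ^ 2))) by auto.
    pose proof (sqrt_pos (fsum d (fun c => v c ^ 2))).
    rewrite <- (pow2_abs (v d)). nra. Qed.

Lemma glb_exists (E : R -> Prop) : (exists r, E r) -> (forall r, E r -> 0 <= r) -> is_glb E (Rinf E).
Proof.
  intros [r0 Hr0] Hlb. unfold Rinf. apply epsilon_spec.
  set (E' := fun r => E (- r)).
  assert (Hb : bound E').
  { exists 0. intros r Hr. unfold E' in Hr. specialize (Hlb _ Hr). lra. }
  assert (Hne : exists r, E' r) by (exists (-r0); unfold E'; rewrite Ropp_involutive; auto).
  destruct (completeness E' Hb Hne) as [l [Hub Hleast]].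
  unfold is_upper_bound in *.
  exists (-l). split.
  - intros r Hr. assert (E' (-r)) by (unfold E'; rewrite Ropp_involutive; auto).
    specialize (Hub _ H). lra.
  - intros m' Hm'. assert (l <= -m'); [|lra]. apply Hleast. intros r Hr.
    unfold E' in Hr. specialize (Hm' _ Hr). lra.
Qed.

Lemma sd_glb d v K : (exists p, K p) ->
  is_glb (fun r => exists p, K p /\ r = vnorm d (fun c => v c - p c)) (set_dist d v K).
Proof. intros [p Hp]. unfold set_dist. apply glb_exists.
  - exists (vnorm d (fun c => v c - p c)). eauto.
  - intros r [p' [_ ->]]. apply vnorm_nonneg. Qed.

Lemma sd_le d v K p : K p -> set_dist d v K <= vnorm d (fun c => v c - p c).
Proof. intros Hp. destruct (sd_glb d v K (ex_intro _ p Hp)) as [H _]. apply H. eauto. Qed.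

Lemma sd_nonneg d v K : (exists p, K p) -> 0 <= set_dist d v K.
Proof. intros Hne. destruct (sd_glb d v K Hne) as [_ H]. apply H.
  intros r [p' [_ ->]]. apply vnorm_nonneg. Qed.

Lemma sd_approx d v K eta : (exists p, K p) -> 0 < eta ->
  exists p, K p /\ vnorm d (fun c => v c - p c) < set_dist d v K + eta.
Proof. intros Hne Heta. destruct (sd_glb d v K Hne) as [_ H].
  apply NNPP. intros Hn.
  assert (set_dist d v K + eta <= set_dist d v K); [|lra].
  apply H. intros r [p [Hp ->]]. apply Rnot_lt_le. intros Hlt. apply Hn. eauto. Qed.

Lemma hull_ne k d y : (1 <= k)%nat -> exists p, conv_hull k d y p.
Proof. intros Hk. exists (y 0%nat). exists (fun j => if Nat.eqb j 0 then 1 else 0).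
  split; [|split].
  - intros j _. destruct (Nat.eqb j 0); lra.
  - rewrite (fsum_ind0 k (fun _ => 1)); auto.
  - intros c _. rewrite (fsum_ext k _ (fun j => if Nat.eqb j 0 then y j c else 0)).
    + rewrite (fsum_ind0 k (fun j => y j c)); auto.
    + intros j _. destruct (Nat.eqb j 0) eqn:E; [apply Nat.eqb_eq in E; subst|]; ring.
Qed.

Lemma fin_delta m (Q : nat -> R -> Prop) :
  (forall i, (i < m)%nat -> exists dl, 0 < dl /\ forall s, 0 < s < dl -> Q i s) ->
  exists dl, 0 < dl /\ forall i s, (i < m)%nat -> 0 < s < dl -> Q i s.
Proof. induction m; intros H.
  - exists 1; split; [lra| intros; lia].
  - destruct IHm as [d1 [Hd1 H1]]. { intros; apply H; lia. }
    destruct (H m) as [d2 [Hd2 H2]]. lia.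
    exists (Rmin d1 d2); split. apply Rmin_pos; auto.
    intros i s Hi Hs. pose proof (Rmin_r d1 d2). pose proof (Rmin_l d1 d2).
    destruct (Nat.eq_dec i m).
    + subst; apply H2. lra.
    + apply H1. lia. lra.
Qed.

Lemma fin_choice {A : Type} m (P : nat -> A -> Prop) (a0 : A) :
  (forall i, (i < m)%nat -> exists z, P i z) -> exists f : nat -> A, forall i, (i < m)%nat -> P i (f i).
Proof. induction m; intros H.
  - exists (fun _ => a0). intros; lia.
  - destruct IHm as [f Hf]. { intros; apply H; lia. }
    destruct (H m) as [z Hz]. lia.
    exists (fun i => if Nat.eqb i m then z else f i). intros i Hi.
    destruct (Nat.eqb i m) eqn:E. apply Nat.eqb_eq in E; subst; auto.
    apply Nat.eqb_neq in E. apply Hf. lia.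
Qed.

Lemma vnorm6 d a1 a2 a3 a4 a5 a6 :
  vnorm d (fun c => a1 c + a2 c + a3 c + a4 c - a5 c - a6 c) <=
  vnorm d a1 + vnorm d a2 + vnorm d a3 + vnorm d a4 + vnorm d a5 + vnorm d a6.
Proof.
  pose proof (vnorm_sub d (fun c => a1 c + a2 c + a3 c + a4 c - a5 c) a6).
  pose proof (vnorm_sub d (fun c => a1 c + a2 c + a3 c + a4 c) a5).
  pose proof (vnorm_add d (fun c => a1 c + a2 c + a3 c) a4).
  pose proof (vnorm_add d (fun c => a1 c + a2 c) a3).
  pose proof (vnorm_add d a1 a2).
  cbv beta in *. lra.
Qed.

Theorem lemma4 (n k d : nat) (Hn : (2 <= n)%nat) (Hk : (1 <= k)%nat) (Hd : (1 <= d)%nat)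
  (nP : nat) (EF EL : nat -> nat -> nat -> bool)
  (tauD : R) (HtauD : 0 < tauD) (sigma : R -> nat)
  (Hsigma : dwell_switching nP tauD sigma)
  (a b : nat -> nat -> fam -> fam -> R -> R)
  (a_lo a_hi b_lo : R) (Ha_lo : 0 < a_lo) (Ha_lohi : a_lo <= a_hi) (Hb_lo : 0 < b_lo)
  (Ha_bnd : forall i j x y t, (i < n)%nat -> (j < n)%nat ->
              a_lo <= a i j x y t <= a_hi)
  (Hb_bnd : forall i j x y t, (i < n)%nat -> (j < k)%nat -> b_lo <= b i j x y t)
  (Ha_cont : forall i j, (i < n)%nat -> (j < n)%nat -> cont_weight n k d (a i j))
  (Hb_cont : forall i j, (i < n)%nat -> (j < k)%nat -> cont_weight n k d (b i j))
  (u : nat -> fam -> R -> vec) (w : nat -> R -> vec)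
  (Hu_y : forall j t c, (j < k)%nat -> (c < d)%nat ->
            cont_fam k d (fun z => u j z t c))
  (Hu_t : forall j z c, (j < k)%nat -> (c < d)%nat ->
            piecewise_cont (fun t => u j z t c))
  (Hw : forall i c, (i < n)%nat -> (c < d)%nat -> continuity (fun t => w i t c))
  (x y : R -> fam)
  (Htraj : trajectory n k d EF EL sigma a b u w x y) :
  let Psi := fun t => fmax n (fun i => set_dist d (x t i) (conv_hull k d (y t)) ^ 2) in
  let q := fun t => fmax k (fun j => vnorm d (u j (y t) t))
                    + fmax n (fun i => vnorm d (w i t)) in
  forall t, 0 <= t -> dini_upper_le (fun s => sqrt (Psi s)) t (q t).
Proof.
  intros Psi q t Ht eps Heps.
  destruct Htraj as [_ [_ [Hy Hx]]].
  set (eta := eps / (2 * INR d + 1)).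
  assert (Hd0 : 0 < 2 * INR d + 1) by (pose proof (pos_INR d); lra).
  assert (Heta : 0 < eta) by (unfold eta; apply Rdiv_lt_0_compat; lra).
  assert (Heta_eq : eta * (2 * INR d + 1) = eps) by (unfold eta; field; lra).
  pose (al := fun i j => if EF (sigma t) j i then a i j (x t) (y t) t else 0).
  pose (be := fun i m => if EL (sigma t) m i then b i m (x t) (y t) t else 0).
  pose (A := fun i => fsum n (al i) + fsum k (be i)).
  assert (Hal : forall i j, (i < n)%nat -> (j < n)%nat -> 0 <= al i j).
  { intros i j Hi Hj. unfold al. destruct (EF (sigma t) j i); [|lra].
    pose proof (Ha_bnd i j (x t) (y t) t Hi Hj). lra. }
  assert (Hbe : forall i m, (i < n)%nat -> (m < k)%nat -> 0 <= be i m).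
  { intros i m Hi Hm. unfold be. destruct (EL (sigma t) m i); [|lra].
    pose proof (Hb_bnd i m (x t) (y t) t Hi Hm). lra. }
  assert (HA : forall i, (i < n)%nat -> 0 <= A i).
  { intros i Hi. unfold A. pose proof (fsum_nonneg n (al i) (fun j Hj => Hal i j Hi Hj)).
    pose proof (fsum_nonneg k (be i) (fun j Hj => Hbe i j Hi Hj)). lra. }
  destruct (fin_delta n (fun i s => forall c, (c < d)%nat ->
     Rabs ((x (t+s) i c - x t i c)/s - follower_rhs n k EF EL sigma a b w (x t) (y t) t i c) < eta))
    as [d1 [Hd1 H1]].
  { intros i Hi.
    destruct (fin_delta d (fun c s =>
       Rabs ((x (t+s) i c - x t i c)/s - follower_rhs n k EF EL sigma a b w (x t) (y t) t i c) < eta))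
      as [dl [Hdl Hdl']].
    { intros c Hc. destruct (Hx i c t Hi Hc Ht eta Heta) as [dl [Hdl Hdl']].
      exists dl; split; auto. }
    exists dl; split; auto. }
  destruct (fin_delta k (fun m s => forall c, (c < d)%nat ->
     Rabs ((y (t+s) m c - y t m c)/s - u m (y t) t c) < eta))
    as [d2 [Hd2 H2]].
  { intros m Hm.
    destruct (fin_delta d (fun c s =>
       Rabs ((y (t+s) m c - y t m c)/s - u m (y t) t c) < eta))
      as [dl [Hdl Hdl']].
    { intros c Hc. destruct (Hy m c t Hm Hc Ht eta Heta) as [dl [Hdl Hdl']].
      exists dl; split; auto. }
    exists dl; split; auto. }
  destruct (fin_delta n (fun i s => s * A i <= 1)) as [d3 [Hd3 H3]].
  { intros i Hi. exists (/ (A i + 1)). pose proof (HA i Hi). split.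
    apply Rinv_0_lt_compat; lra.
    intros s Hs. assert (s * (A i + 1) < 1); [|nra].
    apply Rmult_lt_reg_r with (/ (A i + 1)). apply Rinv_0_lt_compat; lra.
    rewrite Rmult_assoc, Rinv_r, Rmult_1_r, Rmult_1_l by lra. lra. }
  exists (Rmin d1 (Rmin d2 d3)). split.
  { apply Rmin_pos; auto. apply Rmin_pos; auto. }
  intros s Hs.
  pose proof (Rmin_l d1 (Rmin d2 d3)). pose proof (Rmin_r d1 (Rmin d2 d3)).
  pose proof (Rmin_l d2 d3). pose proof (Rmin_r d2 d3).
  assert (Hs1 : 0 < s < d1) by lra. assert (Hs2 : 0 < s < d2) by lra. assert (Hs3 : 0 < s < d3) by lra.
  clear H H0 H4 H5.
  cbv beta.
  assert (Hne : exists p, conv_hull k d (y t) p) by (apply hull_ne; lia).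
  set (D := sqrt (Psi t)).
  assert (HdjD : forall j, (j < n)%nat -> set_dist d (x t j) (conv_hull k d (y t)) <= D).
  { intros j Hj. pose proof (sd_nonneg d (x t j) _ Hne).
    rewrite <- (sqrt_pow2 (set_dist _ _ _)) by auto. unfold D. apply sqrt_le_1_alt.
    unfold Psi. apply (fmax_ge n (fun i => set_dist d (x t i) (conv_hull k d (y t)) ^ 2) j Hj). }
  assert (HD : 0 <= D) by apply sqrt_pos.
  assert (Hs0 : 0 < s) by lra.
  destruct (fin_choice n (fun j L => (forall m, (m < k)%nat -> 0 <= L m) /\ fsum k L = 1 /\
      vnorm d (fun c => x t j c - fsum k (fun m => L m * y t m c))
        < set_dist d (x t j) (conv_hull k d (y t)) + s * eta) (fun _ => 0)) as [lam Hlam].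
  { intros j Hj. destruct (sd_approx d (x t j) _ (s * eta) Hne ltac:(nra)) as [p [[L [HL1 [HL2 HL3]]] Hp]].
    exists L. split; [auto|split; [auto|]].
    eapply Rle_lt_trans; [| exact Hp]. right. apply vnorm_ext. intros c Hc. rewrite HL3; auto. }
  assert (Hq : 0 <= q t).
  { unfold q. pose proof (fmax_ge k (fun j => vnorm d (u j (y t) t)) 0 ltac:(lia)).
    pose proof (fmax_ge n (fun j => vnorm d (w j t)) 0 ltac:(lia)).
    pose proof (vnorm_nonneg d (u 0%nat (y t) t)). pose proof (vnorm_nonneg d (w 0%nat t)).
    cbv beta in *. lra. }
  assert (Key : forall i, (i < n)%nat ->
    set_dist d (x (t+s) i) (conv_hull k d (y (t+s))) <= D + s * (q t + eps)).
  { intros i Hi.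
    destruct (Hlam i Hi) as [Hli0 [Hli1 Hli2]].
    pose (th0 := 1 - s * A i).
    assert (Hth0 : 0 <= th0) by (unfold th0; pose proof (H3 i s Hi Hs3); lra).
    pose (mu := fun m => th0 * lam i m + fsum n (fun j => s * al i j * lam j m) + s * be i m).
    pose (P' := fun c => fsum k (fun m => mu m * y (t+s) m c)).
    assert (Hmu0 : forall m, (m < k)%nat -> 0 <= mu m).
    { intros m Hm. unfold mu.
      assert (0 <= fsum n (fun j => s * al i j * lam j m)).
      { apply fsum_nonneg. intros j Hj. destruct (Hlam j Hj) as [Hl0 _].
        pose proof (Hl0 m Hm). pose proof (Hal i j Hi Hj).
        apply Rmult_le_pos; [apply Rmult_le_pos|]; lra. }
      pose proof (Hli0 m Hm). pose proof (Hbe i m Hi Hm).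
      pose proof (Rmult_le_pos _ _ Hth0 H4). nra. }
    assert (E1 : fsum k (fun m => fsum n (fun j => s * al i j * lam j m)) = s * fsum n (al i)).
    { rewrite <- fsum_swap. rewrite <- fsum_scal. apply fsum_ext. intros j Hj.
      rewrite fsum_scal. destruct (Hlam j Hj) as [_ [Hs1' _]]. rewrite Hs1'. ring. }
    assert (Hmu1 : fsum k mu = 1).
    { unfold mu. rewrite fsum_plus, fsum_plus, fsum_scal, E1, fsum_scal, Hli1.
      unfold th0, A. ring. }
    assert (HP' : conv_hull k d (y (t+s)) P').
    { exists mu. split; [exact Hmu0|split; [exact Hmu1|]]. intros c Hc. reflexivity. }
    eapply Rle_trans; [apply (sd_le _ _ _ _ HP')|].
    pose (pj := fun j c => fsum k (fun m => lam j m * y t m c)).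
    pose (rr := fun c => (x (t+s) i c - x t i c)/s - follower_rhs n k EF EL sigma a b w (x t) (y t) t i c).
    pose (rho := fun m c => (y (t+s) m c - y t m c)/s - u m (y t) t c).
    pose (T1 := fun c => th0 * (x t i c - pj i c)).
    pose (T2 := fun c => fsum n (fun j => s * al i j * (x t j c - pj j c))).
    pose (T3 := fun c => s * w i t c).
    pose (T4 := fun c => s * rr c).
    pose (T5 := fun c => s * fsum k (fun m => mu m * u m (y t) t c)).
    pose (T6 := fun c => s * fsum k (fun m => mu m * rho m c)).
    assert (Eqid : forall c, (c < d)%nat ->
      x (t+s) i c - P' c = T1 c + T2 c + T3 c + T4 c - T5 c - T6 c).
    { intros c Hc.
      assert (Ex : x (t+s) i c = x t i c + s * (follower_rhs n k EF EL sigma a b w (x t) (y t) t i c + rr c))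
        by (unfold rr; field; lra).
      assert (S1 : fsum n (fun j => if EF (sigma t) j i then a i j (x t) (y t) t * (x t j c - x t i c) else 0)
         = fsum n (fun j => al i j * x t j c) - fsum n (al i) * x t i c).
      { rewrite <- fsum_scal_r, <- fsum_minus. apply fsum_ext; intros j Hj. unfold al.
        destruct (EF (sigma t) j i); ring. }
      assert (S2 : fsum k (fun j => if EL (sigma t) j i then b i j (x t) (y t) t * (y t j c - x t i c) else 0)
         = fsum k (fun j => be i j * y t j c) - fsum k (be i) * x t i c).
      { rewrite <- fsum_scal_r, <- fsum_minus. apply fsum_ext; intros j Hj. unfold be.
        destruct (EL (sigma t) j i); ring. }
      assert (Erhs : follower_rhs n k EF EL sigma a b w (x t) (y t) t i c =
          fsum n (fun j => al i j * x t j c) - fsum n (al i) * x t i c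
          + (fsum k (fun j => be i j * y t j c) - fsum k (be i) * x t i c) + w i t c).
      { unfold follower_rhs. rewrite S1, S2. ring. }
      assert (EP : P' c = fsum k (fun m => mu m * y t m c) + s * fsum k (fun m => mu m * u m (y t) t c)
                     + s * fsum k (fun m => mu m * rho m c)).
      { unfold P'. rewrite <- !fsum_scal, <- !fsum_plus. apply fsum_ext; intros m Hm.
        unfold rho. field. lra. }
      assert (Ein : fsum n (fun j => s * al i j * fsum k (fun m => lam j m * y t m c))
          = fsum k (fun m => fsum n (fun j => s * al i j * lam j m) * y t m c)).
      { rewrite (fsum_ext n _ (fun j => fsum k (fun m => s * al i j * lam j m * y t m c))).
        - rewrite fsum_swap. apply fsum_ext; intros m Hm. rewrite <- fsum_scal_r. reflexivity.
        - intros j Hj. rewrite <- fsum_scal. apply fsum_ext; intros; ring. }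
      assert (EY : fsum k (fun m => mu m * y t m c) = th0 * pj i c
          + fsum n (fun j => s * al i j * pj j c) + s * fsum k (fun m => be i m * y t m c)).
      { unfold pj. cbv beta. rewrite Ein. rewrite <- !fsum_scal, <- !fsum_plus.
        apply fsum_ext; intros m Hm. unfold mu. ring. }
      assert (S3 : fsum n (fun j => s * al i j * (x t j c - pj j c)) =
          s * fsum n (fun j => al i j * x t j c) - fsum n (fun j => s * al i j * pj j c)).
      { rewrite <- fsum_scal, <- fsum_minus. apply fsum_ext; intros; ring. }
      unfold T1, T2, T3, T4, T5, T6. cbv beta.
      rewrite EP, EY, S3, Ex, Erhs. unfold th0, A. cbv beta. ring. }
    rewrite (vnorm_ext d _ (fun c => T1 c + T2 c + T3 c + T4 c - T5 c - T6 c) Eqid).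
    eapply Rle_trans; [apply vnorm6|].
    set (G := D + s * eta).
    set (Mu := fmax k (fun j => vnorm d (u j (y t) t))).
    set (Mw := fmax n (fun j => vnorm d (w j t))).
    assert (HG : 0 <= G) by (unfold G; nra).
    assert (N1 : vnorm d T1 <= th0 * G).
    { unfold T1, pj. cbv beta. rewrite vnorm_scal, Rabs_pos_eq by auto.
      apply Rmult_le_compat_l; auto. pose proof (HdjD i Hi). unfold G. lra. }
    assert (N2 : vnorm d T2 <= s * fsum n (al i) * G).
    { unfold T2. eapply Rle_trans; [apply (vnorm_fsum d n (fun j c => s * al i j * (x t j c - pj j c)))|].
      apply Rle_trans with (fsum n (fun j => s * al i j * G)).
      - apply fsum_le; intros j Hj. pose proof (Hal i j Hi Hj).
        rewrite vnorm_scal, Rabs_pos_eq by nra.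
        apply Rmult_le_compat_l; [nra|]. destruct (Hlam j Hj) as [_ [_ Hl]].
        unfold pj. pose proof (HdjD j Hj). unfold G. lra.
      - right. rewrite fsum_scal_r, fsum_scal. reflexivity. }
    assert (N3 : vnorm d T3 <= s * Mw).
    { unfold T3. rewrite vnorm_scal, Rabs_pos_eq by lra. apply Rmult_le_compat_l; [lra|].
      apply (fmax_ge n (fun j => vnorm d (w j t)) i Hi). }
    assert (N4 : vnorm d T4 <= s * (INR d * eta)).
    { unfold T4. rewrite vnorm_scal, Rabs_pos_eq by lra. apply Rmult_le_compat_l; [lra|].
      eapply Rle_trans; [apply vnorm_le_abs|]. rewrite <- fsum_const. apply fsum_le.
      intros c Hc. unfold rr. left. apply (H1 i s Hi Hs1 c Hc). }
    assert (N5 : vnorm d T5 <= s * Mu).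
    { unfold T5. rewrite vnorm_scal, Rabs_pos_eq by lra. apply Rmult_le_compat_l; [lra|].
      eapply Rle_trans; [apply (vnorm_fsum d k (fun m c => mu m * u m (y t) t c))|].
      apply Rle_trans with (fsum k (fun m => mu m * Mu)).
      - apply fsum_le; intros m Hm. rewrite vnorm_scal, Rabs_pos_eq by auto.
        apply Rmult_le_compat_l; auto. apply (fmax_ge k (fun j => vnorm d (u j (y t) t)) m Hm).
      - right. rewrite fsum_scal_r, Hmu1. ring. }
    assert (N6 : vnorm d T6 <= s * (INR d * eta)).
    { unfold T6. rewrite vnorm_scal, Rabs_pos_eq by lra. apply Rmult_le_compat_l; [lra|].
      eapply Rle_trans; [apply (vnorm_fsum d k (fun m c => mu m * rho m c))|].
      apply Rle_trans with (fsum k (fun m => mu m * (INR d * eta))).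
      - apply fsum_le; intros m Hm. rewrite vnorm_scal, Rabs_pos_eq by auto.
        apply Rmult_le_compat_l; auto.
        eapply Rle_trans; [apply vnorm_le_abs|]. rewrite <- fsum_const. apply fsum_le.
        intros c Hc. unfold rho. left. apply (H2 m s Hm Hs2 c Hc).
      - right. rewrite fsum_scal_r, Hmu1. ring. }
    assert (Hbs : 0 <= s * fsum k (be i) * G).
    { pose proof (fsum_nonneg k (be i) (fun j Hj => Hbe i j Hi Hj)).
      apply Rmult_le_pos; [apply Rmult_le_pos|]; lra. }
    assert (Hqt : q t = Mu + Mw) by reflexivity.
    rewrite Hqt, <- Heta_eq.
    unfold th0, A, G in *. cbv beta in *. nra. }
  assert (HB : 0 <= D + s * (q t + eps)) by nra.
  assert (Hsq : sqrt (Psi (t+s)) <= D + s * (q t + eps)).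
  { rewrite <- (sqrt_pow2 (D + s * (q t + eps))) by auto. apply sqrt_le_1_alt.
    unfold Psi. apply fmax_le; [lia|]. intros i Hi. pose proof (Key i Hi).
    pose proof (sd_nonneg d (x (t+s) i) _ (hull_ne k d (y (t+s)) Hk)).
    apply pow_incr; split; auto. }
  apply Rmult_le_reg_l with s; auto.
  replace (s * ((sqrt (Psi (t+s)) - D) / s)) with (sqrt (Psi (t+s)) - D) by (field; lra). lra.
Qed.
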